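(* Let $\mathbb M^{3}$ be Minkowski $3$-space with form $\langle-,-\rangle$ of signature $-++$, and let $\mathcal K\subset\mathbb P^2_\mathbb R$ be the set of lines $\mathbb Rp$ with $\langle p,p\rangle<0$, with its hyperbolic metric, and $\partial\mathcal K$ the set of lines $\mathbb Rf$ with $f\ne0$, $\langle f,f\rangle=0$. Let $\pmb f=\mathbb Rf\in\partial\mathcal K$ and let $\pmb r,\pmb r'\in\mathcal K$ lie on a same horocycle containing $\pmb f$. Then $\nu_{\pmb r}=\nu_{\pmb r'}$, where for $\pmb s=\mathbb Rs\in\mathcal K$ the frequency of the photon $\pmb f$ measured by $\pmb s$ is $\nu_{\pmb s}:=\frac{|\langle f,s\rangle|}{\sqrt{-\langle s,s\rangle}}$ (for a fixed representative $f$).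
   Context: The hyperbolic metric on $\mathcal K$: identifying $T_{\pmb p}\mathbb P^2_\mathbb R=\mathrm{Lin}(\mathbb Rp,p^\perp)$, put $\langle\varphi_1,\varphi_2\rangle_{\pmb p}:=-\frac{\langle\varphi_1(p),\varphi_2(p)\rangle}{\langle p,p\rangle}$; this is Klein's model of the hyperbolic plane (curvature $-1$), with isometry group containing $\mathrm{SO}^+(1,2)$ acting projectively. A parabolic isometry is a non-identity orientation-preserving isometry with exactly one fixed point, which lies in $\partial\mathcal K$. A horocycle containing $\pmb f$ is the orbit of a point of $\mathcal K$ under a one-parameter group of parabolic isometries fixing $\pmb f$ (equivalently, a curve ending at $\pmb f$ orthogonal to every geodesic having $\pmb f$ as a vertex). The quantity $\nu_{\pmb s}$ is, up to a constant factor independent of $\pmb s$, the energy (frequency) of the photon with momentum $f$ as measured by the observer $\mathbb Rs$, i.e. $|\pi'[\pmb s]f|$ with $\pi'[\pmb s]f=\frac{\langle f,s\rangle}{\langle s,s\rangle}s$. *)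

(* Defs.v *)
From HB Require Import structures.
From mathcomp Require Import all_boot all_order all_algebra.
From mathcomp Require Import all_classical all_reals topology normedtype.
Set Implicit Arguments. Unset Strict Implicit. Unset Printing Implicit Defensive.
Import Order.TTheory GRing.Theory Num.Theory numFieldNormedType.Exports.
Local Open Scope ring_scope.

Definition vec (R : realType) := 'cV[R]_3.

Definition minkJ (R : realType) : 'M[R]_3 :=
  diag_mx (\row_(i < 3) (if i == 0 :> nat then -1 else 1)).

Definition mink (R : realType) (x y : vec R) : R := (x^T *m minkJ R *m y) 0 0.

(* x represents a point R x of the Klein disc K *)
Definition in_K (R : realType) (p : vec R) : Prop := mink p p < 0.
(* f represents a point R f of the boundary dK *)
Definition in_bdK (R : realType) (f : vec R) : Prop := f != 0 /\ mink f f = 0.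

Definition same_line (R : realType) (p q : vec R) : Prop :=
  exists c : R, c != 0 /\ p = c *: q.

(* orientation-preserving isometries of K: SO^+(1,2), acting projectively *)
Definition SOplus (R : realType) (A : 'M[R]_3) : Prop :=
  A^T *m minkJ R *m A = minkJ R /\ \det A = 1 /\ 0 < A 0 0.

Definition fixes_pt (R : realType) (A : 'M[R]_3) (p : vec R) : Prop :=
  exists l : R, A *m p = l *: p.

(* A is a parabolic isometry whose unique fixed point (in K u dK) is R f *)
Definition parabolic_fixing (R : realType) (A : 'M[R]_3) (f : vec R) : Prop :=
  SOplus A /\ A != 1%:M /\ fixes_pt A f /\
  forall p : vec R, p != 0 -> mink p p <= 0 -> fixes_pt A p -> same_line p f.

Definition parabolic_1pgroup (R : realType) (g : R -> 'M[R]_3) (f : vec R) : Prop :=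
  g 0 = 1%:M /\ (forall s t, g (s + t) = g s *m g t) /\
  (forall i j : 'I_3, continuous (fun t : R => g t i j)) /\
  (forall t, t != 0 -> parabolic_fixing (g t) f).

Definition on_same_horocycle (R : realType) (f r r' : vec R) : Prop :=
  exists (g : R -> 'M[R]_3) (p0 : vec R) (t t' : R),
    parabolic_1pgroup g f /\ in_K p0 /\
    same_line r (g t *m p0) /\ same_line r' (g t' *m p0).

Definition nu (R : realType) (f s : vec R) : R :=
  `|mink f s| / Num.sqrt (- mink s s).

(* Main.v *)
Require Import Defs.
From mathcomp Require Import all_boot all_order all_algebra.
From mathcomp Require Import all_classical all_reals topology normedtype.
From mathcomp Require Import ring lra.
Import Order.TTheory GRing.Theory Num.Theory numFieldNormedType.Exports.
Local Open Scope ring_scope.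
Set Implicit Arguments.

Lemma minkZl (R : realType) (c : R) (x y : vec R) :
  mink (c *: x) y = c * mink x y.
Proof. by rewrite /mink linearZ /= -!scalemxAl mxE. Qed.

Lemma minkZr (R : realType) (c : R) (x y : vec R) :
  mink x (c *: y) = c * mink x y.
Proof. by rewrite /mink -!scalemxAr mxE. Qed.

Lemma mink_iso (R : realType) (A : 'M[R]_3) (x y : vec R) :
  A^T *m minkJ R *m A = minkJ R -> mink (A *m x) (A *m y) = mink x y.
Proof.
move=> HA; by rewrite /mink -[in RHS]HA trmx_mul !mulmxA.
Qed.

Lemma nuZ (R : realType) (c : R) (f q : vec R) : c != 0 ->
  nu f (c *: q) = nu f q.
Proof.
move=> c0; rewrite /nu minkZr minkZl minkZr.
have -> : - (c * (c * mink q q)) = c ^+ 2 * (- mink q q) by ring.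
rewrite sqrtrM ?sqr_ge0 // sqrtr_sqr normrM.
have nc : `|c| != 0 by rewrite normr_eq0.
by rewrite invfM mulrACA divff // mul1r.
Qed.

Lemma eq_le_0 (R : realType) (x : R) : x = 0 -> x <= 0.
Proof. by move=> ->. Qed.

Lemma parabolic_eig (R : realType) (A : 'M[R]_3) (f : vec R) (l : R) :
  f != 0 -> parabolic_fixing A f -> A *m f = l *: f -> l ^+ 2 = 1.
Proof.
move=> f0 [[HA [dA _]] [_ [_ Huniq]]] Af.
have l0 : l != 0.
  apply/eqP => l0; move: Af; rewrite l0 scale0r => Af.
  have : A \in unitmx by rewrite unitmxE dA unitr1.
  move=> /mulKmx => /(_ _ f); rewrite Af.
  by rewrite mulmx0 => fe; move: f0; rewrite -fe eqxx.
apply/eqP; apply/negPn/negP => hl.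
set mu := l^-1.
set w := minkJ R *m f.
have w0 : w != 0.
  apply/eqP => w0.
  have JJ : minkJ R *m minkJ R = 1%:M.
    apply/matrixP => i j; rewrite /minkJ mul_diag_mx !mxE.
    rewrite mulrnAr; congr (_ *+ _).
    by case: ifP => _; rewrite ?mulN1r ?opprK ?mulr1.
  by move: f0; rewrite -[f]mul1mx -JJ -mulmxA -/w w0 mulmx0 eqxx.
have Atw : A^T *m w = mu *: w.
  have : A^T *m minkJ R *m (A *m f) = minkJ R *m f by rewrite mulmxA HA.
  rewrite Af -scalemxAr -mulmxA -/w => H.
  by rewrite -[in RHS]H scalerA mulVf // scale1r.
set B := A - mu%:M.
have dB : \det B = 0.
  apply/eqP/det0P; exists w^T; first by rewrite trmx_eq0.
  rewrite -[w^T *m B]trmxK trmx_mul trmxK linearB /= tr_scalar_mx.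
  by rewrite mulmxBl Atw mul_scalar_mx subrr linear0.
have : \det B^T == 0 by rewrite det_tr dB.
move=> /det0P [v v0 vB].
set u := v^T.
have u0 : u != 0 by rewrite trmx_eq0.
have Au : A *m u = mu *: u.
  apply/eqP; rewrite -subr_eq0 -mul_scalar_mx -mulmxBl.
  by rewrite -/B -[_ *m u]trmxK trmx_mul /u trmxK vB linear0.
have mu2 : mu ^+ 2 != 1.
  by rewrite /mu exprVn invr_eq1.
have muu : mink u u = 0.
  have := mink_iso u u HA; rewrite Au minkZl minkZr mulrA -expr2 => H.
  apply/eqP; move: mu2; apply: contraR => nz.
  by apply/eqP; apply: (mulIf nz); rewrite mul1r.
have [c [c0 uc]] := Huniq u u0 (@eq_le_0 _ _ muu) (ex_intro _ mu Au).
move: Au; rewrite uc -scalemxAr Af scalerA [in RHS]scalerA => H.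
have : (c * l - mu * c) *: f = 0 by rewrite scalerBl H subrr.
move/eqP; rewrite scaler_eq0 (negbTE f0) orbF subr_eq0 mulrC.
rewrite (inj_eq (mulIf c0)) => /eqP lmu.
move: hl; rewrite expr2 {1}lmu /mu mulVf // eqxx //.
Qed.

Lemma nu_iso (R : realType) (g : R -> 'M[R]_3) (f p : vec R) (t : R) :
  f != 0 -> parabolic_1pgroup g f -> nu f (g t *m p) = nu f p.
Proof.
move=> f0 [g0 [_ [_ Hpar]]].
have [->|t0] := eqVneq t 0; first by rewrite g0 mul1mx.
have Hp := Hpar t t0.
have [[HA _] [_ [[l Af] _]]] := Hp.
have l2 := parabolic_eig f0 Hp Af.
rewrite /nu mink_iso //.
have := mink_iso f p HA; rewrite Af minkZl => <-.
rewrite normrM.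
have -> : `|l| = 1.
  by have := sqrtr_sqr l; rewrite l2 sqrtr1 => <-.
by rewrite mul1r.
Qed.

Theorem lemma4 (R : realType) (f r r' : vec R) :
  in_bdK f -> in_K r -> in_K r' -> on_same_horocycle f r r' ->
  nu f r = nu f r'.
Proof.
move=> [f0 _] _ _ [g [p0 [t [t' [Hg [_ [[c [c0 ->]] [c' [c'0 ->]]]]]]]]].
by rewrite !nuZ // !(nu_iso _ _ f0 Hg).
Qed.
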